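(* Let $(z,x)$ be a feasible solution of the cluster LP on a finite vertex set $V$, and define $y_{uv}=\sum_{S\supseteq\{u,v\}}z_S$ and $y_{uvw}=\sum_{S\supseteq\{u,v,w\}}z_S$ for all $u,v,w\in V$ (not necessarily distinct; so $y_{uu}=1$). Let $I_1,\dots,I_t$ be a partition of $[0,1]$ into intervals. Fix $u\in V$ and define $Q_u\in\mathbb R^{t\times t}$ by $$Q_u(I_j,I_k)=\sum_{v,w\in V:\ y_{uv}\in I_j,\ y_{uw}\in I_k}\big(y_{uvw}-y_{uv}y_{uw}\big).$$ Then $Q_u$ is positive semidefinite.
   Context: The cluster LP for a finite vertex set $V$ has a variable $z_S$ for every nonempty $S\subseteq V$ and $x_{uv}$ for every unordered pair $uv$ of distinct vertices, with constraints $\sum_{S\ni u}z_S=1$ for all $u\in V$, $\sum_{S\supseteq\{u,v\}}z_S=1-x_{uv}$ for all $uv$, and $z_S\ge0$. *)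

(* Defs.v *)
From mathcomp Require Import all_boot all_order all_algebra.
Set Implicit Arguments. Unset Strict Implicit. Unset Printing Implicit Defensive.
Import Order.TTheory GRing.Theory Num.Theory.
Local Open Scope ring_scope.

(* Variables z_S for nonempty S are
   encoded by z : {set V} -> R (the value at set0 is never used), and
   x_{uv} for unordered pairs of distinct vertices by a function x. *)
Definition cluster_LP_feasible (R : realFieldType) (V : finType)
    (z : {set V} -> R) (x : V -> V -> R) : Prop :=
  [/\ forall S : {set V}, S != set0 -> 0 <= z S,
      forall u : V, \sum_(S : {set V} | u \in S) z S = 1,
      forall u v : V, u != v -> x u v = x v u &
      forall u v : V, u != v ->
        \sum_(S : {set V} | (u \in S) && (v \in S)) z S = 1 - x u v].

Definition y2 (R : realFieldType) (V : finType) (z : {set V} -> R) (u v : V) : R :=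
  \sum_(S : {set V} | (u \in S) && (v \in S)) z S.

Definition y3 (R : realFieldType) (V : finType) (z : {set V} -> R) (u v w : V) : R :=
  \sum_(S : {set V} | [&& u \in S, v \in S & w \in S]) z S.

Definition interval_partition01 (R : realFieldType) (t : nat)
    (I : 'I_t -> interval R) : Prop :=
  (forall j (r : R), r \in I j -> r \in `[0, 1]) /\
  (forall r : R, r \in `[0, 1] -> exists! j, r \in I j).

Definition Qmat (R : realFieldType) (V : finType) (z : {set V} -> R) (t : nat)
    (I : 'I_t -> interval R) (u : V) : 'M[R]_t :=
  \matrix_(j < t, k < t)
    \sum_(v : V | y2 z u v \in I j) \sum_(w : V | y2 z u w \in I k)
       (y3 z u v w - y2 z u v * y2 z u w).

Definition psd (R : realFieldType) (n : nat) (M : 'M[R]_n) : Prop :=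
  M^T = M /\ forall c : 'cV[R]_n, 0 <= (c^T *m M *m c) 0 0.

(* Main.v *)
Require Import Defs.
From mathcomp Require Import all_boot all_order all_algebra.
Set Implicit Arguments. Unset Strict Implicit. Unset Printing Implicit Defensive.
Import Order.TTheory GRing.Theory Num.Theory.
Local Open Scope ring_scope.

Section S.
Variables (R : realFieldType) (V : finType) (z : {set V} -> R) (u : V) (a : V -> R).

Lemma L1 : \sum_(S : {set V} | u \in S) z S * (\sum_(v in S) a v)
  = \sum_v a v * y2 z u v.
Proof.
under eq_bigr do rewrite big_distrr.
rewrite /y2 (exchange_big_dep predT) //=.
apply: eq_bigr => v _; rewrite big_distrr /=.
apply: eq_big => [S|S /andP[_ _]]; first by rewrite andbC.
by rewrite mulrC.
Qed.

Lemma L2 : \sum_(S : {set V} | u \in S) z S * (\sum_(v in S) a v)^+2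
  = \sum_v \sum_w a v * a w * y3 z u v w.
Proof.
under eq_bigr do rewrite expr2 big_distrl /= big_distrr /=.
under eq_bigr do under eq_bigr do rewrite big_distrr /=.
rewrite (exchange_big_dep predT) //=.
apply: eq_bigr => v _.
under eq_bigr do rewrite big_distrr /=.
rewrite (exchange_big_dep predT) //=.
apply: eq_bigr => w _.
rewrite /y3 big_distrr /=.
apply: eq_big => [S|S _].
  by case: (u \in S); case: (v \in S); case: (w \in S).
by rewrite mulrC.
Qed.
End S.
From mathcomp Require Import ring.

Theorem lemma25 (R : realFieldType) (V : finType) (z : {set V} -> R)
  (x : V -> V -> R) (t : nat) (I : 'I_t -> interval R) (u : V) :
  cluster_LP_feasible z x -> interval_partition01 I -> psd (Qmat z I u).
Proof.
move=> [z0 zsum _ _] _; split.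
  apply/matrixP => j k; rewrite !mxE exchange_big /=.
  apply: eq_bigr => w _; apply: eq_bigr => v _.
  rewrite mulrC /y3; congr (_ - _); apply: eq_bigl => S.
  by case: (v \in S); case: (w \in S); rewrite ?andbF.
move=> c.
pose a v := \sum_(j < t | y2 z u v \in I j) c j 0.
pose m := \sum_v a v * y2 z u v.
pose A (S : {set V}) := \sum_(v in S) a v.
have E : (c^T *m Qmat z I u *m c) 0 0 =
   \sum_v \sum_w a v * a w * (y3 z u v w - y2 z u v * y2 z u w).
  pose b j v := if y2 z u v \in I j then c j 0 else 0.
  pose g v w := y3 z u v w - y2 z u v * y2 z u w.
  have P1 : forall j k, c j 0 * Qmat z I u j k * c k 0 =
      \sum_v \sum_w b j v * b k w * g v w.
    move=> j k; rewrite mxE big_distrr big_distrl big_mkcond /=.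
    apply: eq_bigr => v _; rewrite /b; case: ifP => Pv; last first.
      by rewrite ?mul0r ?mulr0; apply/esym/big1 => w _; rewrite !mul0r.
    rewrite big_distrr big_distrl big_mkcond /=.
    apply: eq_bigr => w _; case: ifP => Pw /=; last by rewrite ?mulr0 ?mul0r.
    by rewrite /g; ring.
  have P2 : forall v w, a v * a w * g v w = \sum_j \sum_k b j v * b k w * g v w.
    move=> v w; rewrite /a !(big_mkcond (fun j => y2 z u _ \in I j)) big_distrl big_distrl /=.
    apply: eq_bigr => j _; rewrite big_distrr big_distrl /=.
    by apply: eq_bigr => k _.
  rewrite [LHS]mxE.
  under eq_bigr do rewrite mxE big_distrl /=.
  under eq_bigr do under eq_bigr do rewrite mxE P1.
  under [RHS]eq_bigr do under eq_bigr do rewrite -/(g _ _) P2.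
  under [RHS]eq_bigr do rewrite exchange_big /=.
  under [RHS]eq_bigr do under eq_bigr do rewrite exchange_big /=.
  rewrite [RHS]exchange_big /=.
  under [RHS]eq_bigr do rewrite exchange_big /=.
  by rewrite [LHS]exchange_big.
have F : \sum_v \sum_w a v * a w * (y3 z u v w - y2 z u v * y2 z u w)
   = \sum_(S : {set V} | u \in S) z S * (A S - m)^+2.
  have -> : \sum_(S : {set V} | u \in S) z S * (A S - m)^+2 =
     \sum_(S : {set V} | u \in S) (z S * A S^+2)
     - (\sum_(S : {set V} | u \in S) z S * A S) * (2 * m)
     + (\sum_(S : {set V} | u \in S) z S) * m^+2.
    rewrite !big_distrl -sumrB -big_split /=; apply: eq_bigr => S _; ring.
  rewrite L2 L1 zsum mul1r -/m.
  under eq_bigr do under eq_bigr do rewrite mulrBr.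
  under eq_bigr do rewrite sumrB.
  rewrite sumrB.
  have -> : \sum_v \sum_w a v * a w * (y2 z u v * y2 z u w) = m ^+ 2.
    rewrite expr2 big_distrl; apply: eq_bigr => v _; rewrite big_distrr; apply: eq_bigr => w _ /=; ring.
  ring.
rewrite E F; apply: sumr_ge0 => S uS; apply: mulr_ge0; last exact: sqr_ge0.
by apply: z0; apply/set0Pn; exists u.
Qed.
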